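(* Let $G=\langle x\rangle$ be a finite cyclic group. Then $G$ admits a $2$-PDR of valency $3$ if and only if $o(x)\geq 5$.
   Context: For a group $G$ and an integer $m\geq 2$, write $g_i$ for the element $(g,i)$ of $G\times\mathbb{Z}_m$. Given subsets $T_{i,j}\subseteq G$ for $i,j\in\mathbb{Z}_m$, the $m$-Cayley digraph $\mathrm{Cay}(G,T_{i,j}:i,j\in\mathbb{Z}_m)$ is the digraph with vertex set $G\times\mathbb{Z}_m$ and arc set $\bigcup_{i,j\in\mathbb{Z}_m}\{(g_i,(tg)_j): t\in T_{i,j},\, g\in G\}$. It is called an $m$-partite Cayley digraph if $T_{i,i}=\emptyset$ for all $i\in\mathbb{Z}_m$. A digraph is regular of valency $k$ if every vertex has out-valency $k$ and in-valency $k$. A group $G$ admits an $m$-PDR of valency $k$ if there exists an $m$-partite Cayley digraph $\Gamma$ over $G$ which is regular of valency $k$ and whose full automorphism group $\mathrm{Aut}(\Gamma)$ is isomorphic to $G$. $o(x)$ denotes the order of $x$. *)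

(* Defs.v *)
From mathcomp Require Import all_boot all_fingroup.
Set Implicit Arguments. Unset Strict Implicit. Unset Printing Implicit Defensive.
Local Open Scope group_scope.

(* Vertices of an m-Cayley digraph over gT: pairs (g, i) = g_i with i in Z_m,
   represented by 'I_m (m >= 2 is assumed where used). *)
Definition mvertex (gT : finGroupType) (m : nat) := (gT * 'I_m)%type.

Definition mcay_arc (gT : finGroupType) (m : nat) (T : 'I_m -> 'I_m -> {set gT})
  (u v : mvertex gT m) : bool :=
  [exists t in T u.2 v.2, v.1 == t * u.1].

Definition mpartite (gT : finGroupType) (m : nat) (T : 'I_m -> 'I_m -> {set gT}) :=
  forall i : 'I_m, T i i = set0.

Definition regular_valency (gT : finGroupType) (m : nat)
  (T : 'I_m -> 'I_m -> {set gT}) (k : nat) :=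
  forall u : mvertex gT m,
    #|[set v | mcay_arc T u v]| = k /\ #|[set v | mcay_arc T v u]| = k.

Definition mcay_Aut (gT : finGroupType) (m : nat) (T : 'I_m -> 'I_m -> {set gT})
  : {set {perm mvertex gT m}} :=
  [set s : {perm mvertex gT m} |
     [forall u, forall v, mcay_arc T u v == mcay_arc T (s u) (s v)]].

Definition admits_mPDR (gT : finGroupType) (m k : nat) :=
  exists T : 'I_m -> 'I_m -> {set gT},
    [/\ mpartite T, regular_valency T k & mcay_Aut T \isog [set: gT]].

(* Main.v *)
Require Import Defs.
From mathcomp Require Import all_boot all_fingroup cyclic.
From mathcomp Require Import zify.
Local Open Scope group_scope.
Set Implicit Arguments. Unset Strict Implicit.

Lemma I2_cases (i j k : 'I_2) : i != j -> k = i \/ k = j.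
Proof.
move=> ij; case: i j k ij => [[|[|?]] ?] [[|[|?]] ?] [[|[|?]] ?] //= _;
  by [left; apply: val_inj | right; apply: val_inj].
Qed.

Lemma Aut_group_set (gT : finGroupType) (m : nat) (T : 'I_m -> 'I_m -> {set gT}) :
  group_set (mcay_Aut T).
Proof.
apply/group_setP; split.
  by rewrite inE; apply/forallP => u; apply/forallP => v; rewrite !perm1.
move=> s t; rewrite !inE => /forallP Hs /forallP Ht.
apply/forallP => u; apply/forallP => v; rewrite !permM.
have /forallP/(_ v)/eqP -> := Hs u.
by have /forallP/(_ (s v))/eqP -> := Ht (s u).
Qed.

Canonical mcay_Aut_group (gT : finGroupType) (m : nat) (T : 'I_m -> 'I_m -> {set gT}) :=
  Group (@Aut_group_set gT m T).

Lemma out_set (gT : finGroupType) (T : 'I_2 -> 'I_2 -> {set gT}) (HT : mpartite T)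
  (g : gT) (i j : 'I_2) : i != j ->
  [set v | mcay_arc T (g, i) v] = [set (t * g, j) | t in T i j].
Proof.
move=> ij; apply/setP => [[h k]]; rewrite inE /mcay_arc /=.
case: (I2_cases k ij) => ->.
  rewrite HT; apply/existsP/imsetP => [[t]|[t _ [_ E]]]; first by rewrite inE.
  by move: ij; rewrite E eqxx.
apply/existsP/imsetP.
  by case=> t /andP[Ht /eqP ->]; exists t.
case=> t Ht [->]; exists t; by rewrite Ht eqxx.
Qed.

Lemma in_set (gT : finGroupType) (T : 'I_2 -> 'I_2 -> {set gT}) (HT : mpartite T)
  (g : gT) (i j : 'I_2) : i != j ->
  [set v | mcay_arc T v (g, i)] = [set (t^-1 * g, j) | t in T j i].
Proof.
move=> ij; apply/setP => [[h k]]; rewrite inE /mcay_arc /=.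
case: (I2_cases k ij) => ->.
  rewrite HT; apply/existsP/imsetP => [[t]|[t _ [_ E]]]; first by rewrite inE.
  by move: ij; rewrite E eqxx.
apply/existsP/imsetP.
  case=> t /andP[Ht /eqP ->]; exists t => //; by rewrite mulgA mulVg mul1g.
case=> t Ht [->]; exists t; by rewrite Ht mulgA mulgV mul1g eqxx.
Qed.

Lemma out_card (gT : finGroupType) (T : 'I_2 -> 'I_2 -> {set gT}) (HT : mpartite T)
  (g : gT) (i j : 'I_2) : i != j ->
  #|[set v | mcay_arc T (g, i) v]| = #|T i j|.
Proof.
by move=> ij; rewrite (out_set HT g ij) card_imset // => a b [] /mulIg.

Qed.

Lemma in_card (gT : finGroupType) (T : 'I_2 -> 'I_2 -> {set gT}) (HT : mpartite T)
  (g : gT) (i j : 'I_2) : i != j ->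
  #|[set v | mcay_arc T v (g, i)]| = #|T j i|.
Proof.
by move=> ij; rewrite (in_set HT g ij) card_imset // => a b [] /mulIg /invg_inj.
Qed.
Definition o0 : 'I_2 := ord0.
Definition o1 : 'I_2 := ord_max.

Lemma o01 : o0 != o1. Proof. by []. Qed.
Lemma o10 : o1 != o0. Proof. by []. Qed.

Lemma I2_01 (k : 'I_2) : k = o0 \/ k = o1.
Proof. exact: I2_cases k o01. Qed.

Lemma arcE (gT : finGroupType) (m : nat) (T : 'I_m -> 'I_m -> {set gT}) g i g' j :
  mcay_arc T (g, i) (g', j) = (g' * g^-1 \in T i j).
Proof.
rewrite /mcay_arc /=; apply/existsP/idP => [[t /andP[Ht /eqP ->]]|H].
  by rewrite -mulgA mulgV mulg1.
by exists (g' * g^-1); rewrite H -mulgA mulVg mulg1 eqxx.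
Qed.

Definition rho_fun (gT : finGroupType) (m : nat) (h : gT) (v : mvertex gT m)
  : mvertex gT m := (v.1 * h, v.2).

Lemma rho_inj (gT : finGroupType) (m : nat) (h : gT) : injective (@rho_fun gT m h).
Proof.
move=> [a i] [b j] [] /mulIg -> ->; by [].
Qed.

Definition rho (gT : finGroupType) (m : nat) (h : gT) : {perm mvertex gT m} :=
  perm (@rho_inj gT m h).
Arguments rho {gT m} h.

Lemma rhoE (gT : finGroupType) (m : nat) (h : gT) (v : mvertex gT m) :
  rho h v = (v.1 * h, v.2).
Proof. by rewrite permE. Qed.

Lemma rho_Aut (gT : finGroupType) (m : nat) (T : 'I_m -> 'I_m -> {set gT}) h :
  rho h \in mcay_Aut T.
Proof.
rewrite inE; apply/forallP => [[g i]]; apply/forallP => [[g' j]].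
by rewrite !rhoE /= !arcE invMg mulgA -(mulgA g') mulgV mulg1.
Qed.

Lemma rho_inj2 (gT : finGroupType) (m : nat) (v0 : mvertex gT m) :
  injective (@rho gT m).
Proof.
move=> a b /permP /(_ v0); rewrite !rhoE => -[] /mulgI; by [].
Qed.

Lemma Aut_big (gT : finGroupType) (T : 'I_2 -> 'I_2 -> {set gT})
  (s : {perm mvertex gT 2}) :
  s \in mcay_Aut T -> (s (1, o0)).2 = o1 -> #|gT| < #|mcay_Aut T|.
Proof.
move=> sA s2.
have sub : s |: [set (rho h : {perm mvertex gT 2}) | h in [set: gT]] \subset mcay_Aut T.
  apply/subsetP => y; rewrite in_setU1 => /orP[/eqP -> //|/imsetP[h _ ->]].
  exact: rho_Aut.
apply: leq_trans (subset_leq_card sub).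
rewrite cardsU1 card_imset; last exact: (rho_inj2 (1, o0)).
rewrite cardsT.
suff -> : s \notin [set rho h | h in [set: gT]] by [].
by apply/imsetP => -[h _ E]; move: s2; rewrite E rhoE.
Qed.

Definition sw_fun (gT : finGroupType) (c d : gT) (v : mvertex gT 2) : mvertex gT 2 :=
  if v.2 == o0 then (c * v.1, o1) else (d * v.1, o0).

Lemma sw_inj (gT : finGroupType) (c d : gT) : injective (sw_fun c d).
Proof.
move=> [a i] [b j] E; have E2 := congr1 snd E; have E1 := congr1 fst E.
move: E1 E2; rewrite /sw_fun /=.
by case: (I2_01 i) => ->; case: (I2_01 j) => -> /=; [move=> /mulgI -> | move=> _ /eqP | move=> _ /eqP | move=> /mulgI ->].
Qed.
Arguments sw_inj {gT} c d.

Lemma sw_Aut (gT : finGroupType) (T : 'I_2 -> 'I_2 -> {set gT}) (c d : gT)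
  (HT : mpartite T)
  (H1 : forall y, (y \in T o0 o1) = (d * y * c^-1 \in T o1 o0))
  (H2 : forall y, (y \in T o1 o0) = (c * y * d^-1 \in T o0 o1)) :
  perm (sw_inj c d) \in mcay_Aut T.
Proof.
rewrite inE; apply/forallP => [[g i]]; apply/forallP => [[g' j]].
rewrite !permE /sw_fun /=.
case: (I2_01 i) => ->; case: (I2_01 j) => -> /=; rewrite !arcE ?HT ?inE //.
  by rewrite H1 invMg !mulgA.
by rewrite H2 invMg !mulgA.
Qed.

Lemma cancel_eq (gT : finGroupType) (d y c : gT) : (d * y * c^-1 == d) = (y == c).
Proof.
by rewrite -{2}[d]mulg1 -mulgA (inj_eq (mulgI d)) -eq_mulgV1.
Qed.

Lemma compl1 (gT : finGroupType) (A : {set gT}) :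
  #|A| = 3 -> #|gT| = 4 -> exists c, forall y, (y \in A) = (y != c).
Proof.
move=> cA n4; have := cardsC A; rewrite cA n4 => h.
have /cards1P[c Ec] : #|~: A| == 1%N by apply/eqP; lia.
by exists c => y; rewrite -[y \in A]negbK -in_setC Ec in_set1.
Qed.

Lemma only_if (gT : finGroupType) (T : 'I_2 -> 'I_2 -> {set gT}) (HT : mpartite T)
  (Hreg : regular_valency T 3) (Hiso : mcay_Aut T \isog [set: gT]) : 4 < #|gT|.
Proof.
have c01 : #|T o0 o1| = 3 by rewrite -(out_card HT 1 o01); case: (Hreg (1, o0)).
have c10 : #|T o1 o0| = 3 by rewrite -(out_card HT 1 o10); case: (Hreg (1, o1)).
have cA : #|mcay_Aut T| = #|gT|.
  by rewrite (@card_isog _ _ (mcay_Aut_group T) [set: gT]%G Hiso) cardsT.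
rewrite ltnNge; apply/negP => n4.
have n3 : 3 <= #|gT| by rewrite -c01 max_card.
suff [s sA s2] : exists2 s, s \in mcay_Aut T & (s (1, o0)).2 = o1.
  by have := Aut_big sA s2; rewrite cA ltnn.
have [n3'|n4'] : #|gT| = 3 \/ #|gT| = 4 by lia.
  have E01 : T o0 o1 = [set: gT] by apply/eqP; rewrite eqEcard subsetT cardsT c01 n3'.
  have E10 : T o1 o0 = [set: gT] by apply/eqP; rewrite eqEcard subsetT cardsT c10 n3'.
  exists (perm (sw_inj 1 1)); last by rewrite permE.
  by apply: sw_Aut => // y; rewrite E01 E10 !inE.
have [c Hc] := compl1 c01 n4'.
have [d Hd] := compl1 c10 n4'.
exists (perm (sw_inj c d)); last by rewrite permE.
by apply: sw_Aut => // y; rewrite Hc Hd cancel_eq.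
Qed.

Lemma card3 (T : finType) (a b c : T) :
  a != b -> a != c -> b != c -> #|[set a; b; c]| = 3%N.
Proof.
move=> ab ac bc; rewrite -setUA cardsU1 cards2 bc !inE negb_or ab ac.
by [].
Qed.

Lemma nxP (gT : finGroupType) (x : gT) (hx : 4 < #[x]) k :
  0 < k < 5 -> x ^+ k <> 1.
Proof.
move=> hk E; have := order_dvdn x k; rewrite E eqxx => /dvdn_leq; lia.
Qed.

Lemma L1P (gT : finGroupType) (x : gT) a b : x ^- a = x ^+ b -> x ^+ (a + b) = 1.
Proof. by move=> E; rewrite expgD -E mulgV. Qed.

Lemma L2P (gT : finGroupType) (x : gT) a c : x ^+ a = x ^+ (a + c) -> x ^+ c = 1.
Proof. by move=> E; apply: (mulgI (x ^+ a)); rewrite -expgD -E mulg1. Qed.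

Definition Tc (gT : finGroupType) (x : gT) (i j : 'I_2) : {set gT} :=
  if i == o0 then (if j == o1 then [set 1; x; x ^+ 2] else set0)
  else (if j == o0 then [set x ^- 2; x ^- 1; x] else set0).

Lemma Tc_part (gT : finGroupType) (x : gT) : mpartite (Tc x).
Proof. by move=> i; case: (I2_01 i) => ->. Qed.

Lemma Tc01 (gT : finGroupType) (x : gT) : Tc x o0 o1 = [set 1; x; x ^+ 2].
Proof. by []. Qed.
Lemma Tc10 (gT : finGroupType) (x : gT) : Tc x o1 o0 = [set x ^- 2; x ^- 1; x].
Proof. by []. Qed.

Lemma Tc_card01 (gT : finGroupType) (x : gT) (hx : 4 < #[x]) : #|Tc x o0 o1| = 3%N.
Proof.
rewrite Tc01 card3 //; apply/eqP => E.
- by apply: (nxP hx (k := 1)) => //; rewrite expg1 E.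
- by apply: (nxP hx (k := 2)) => //; rewrite E.
- by apply: (nxP hx (k := 1)) => //; apply: (@L2P _ x 1 1); rewrite expg1.
Qed.

Lemma Tc_card10 (gT : finGroupType) (x : gT) (hx : 4 < #[x]) : #|Tc x o1 o0| = 3%N.
Proof.
rewrite Tc10 card3 //; apply/eqP => E.
- apply: (nxP hx (k := 1)) => //; apply: (@L2P _ x 1 1).
  by apply: invg_inj; rewrite expg1.
- by apply: (nxP hx (k := 3)) => //; apply: (@L1P _ x 2 1); rewrite expg1.
- by apply: (nxP hx (k := 2)) => //; apply: (@L1P _ x 1 1); rewrite expg1.
Qed.

Definition phi (gT : finGroupType) (x : gT) (v : mvertex gT 2) : mvertex gT 2 :=
  if v.2 == o0 then (v.1, o1) else (x * v.1, o0).

Lemma phi_ok (gT : finGroupType) (x : gT) (hx : 4 < #[x]) (u : mvertex gT 2) :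
  mcay_arc (Tc x) u (phi x u) && ~~ mcay_arc (Tc x) (phi x u) u.
Proof.
case: u => g i; case: (I2_01 i) => -> /=; rewrite /phi /= !arcE.
  rewrite mulgV Tc01 Tc10 !inE eqxx /=.
  apply/negP => /orP[/orP[/eqP E|/eqP E]|/eqP E].
  - by apply: (nxP hx (k := 2)) => //; apply: (@L1P _ x 2 0); rewrite expg0 E.
  - by apply: (nxP hx (k := 1)) => //; apply: (@L1P _ x 1 0); rewrite expg0 E.
  - by apply: (nxP hx (k := 1)) => //; rewrite expg1 E.
rewrite mulgK invMg mulKVg Tc01 Tc10 !inE eqxx orbT /=.
apply/negP => /orP[/orP[/eqP E|/eqP E]|/eqP E].
- by apply: (nxP hx (k := 1)) => //; rewrite expg1 -[x]invgK E invg1.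
- by apply: (nxP hx (k := 2)) => //; apply: (@L1P _ x 1 1); rewrite expg1 E.
- by apply: (nxP hx (k := 3)) => //; apply: (@L1P _ x 1 2); rewrite E.
Qed.

Lemma phi_uniq (gT : finGroupType) (x : gT) (u v : mvertex gT 2) :
  mcay_arc (Tc x) u v -> ~~ mcay_arc (Tc x) v u -> v = phi x u.
Proof.
case: u v => g i [g' j]; rewrite !arcE /phi /=.
have Einv : g * g'^-1 = (g' * g^-1)^-1 by rewrite invMg invgK.
rewrite Einv; move Ey : (g' * g^-1) => y.
case: (I2_01 i) => ->; case: (I2_01 j) => -> /=; rewrite ?Tc_part ?inE //.
  move=> /orP[/orP[/eqP E|/eqP E]|/eqP E]; rewrite E ?invg1 ?eqxx ?orbT //.
  by move=> _; congr pair; apply: (mulIg g^-1); rewrite mulgV Ey E.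
move=> /orP[/orP[/eqP E|/eqP E]|/eqP E]; rewrite E ?invgK ?eqxx ?orbT //.
by move=> _; congr pair; rewrite -E -Ey mulgKV.
Qed.

Lemma Aut_arc (gT : finGroupType) (m : nat) (T : 'I_m -> 'I_m -> {set gT})
  (s : {perm mvertex gT m}) :
  s \in mcay_Aut T -> forall a b, mcay_arc T (s a) (s b) = mcay_arc T a b.
Proof.
by move=> sA a b; move: sA; rewrite inE => /forallP/(_ a)/forallP/(_ b)/eqP ->.
Qed.

Lemma Aut_phi (gT : finGroupType) (x : gT) (hx : 4 < #[x]) (s : {perm mvertex gT 2}) :
  s \in mcay_Aut (Tc x) -> forall u, s (phi x u) = phi x (s u).
Proof.
move=> sA u; apply: phi_uniq; rewrite !(Aut_arc sA).
  by case/andP: (phi_ok hx u).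
by case/andP: (phi_ok hx u).
Qed.

Lemma Aut_sub (gT : finGroupType) (x : gT) (hx : 4 < #[x]) (hG : <[x]> = [set: gT])
  (s : {perm mvertex gT 2}) :
  s \in mcay_Aut (Tc x) -> s \in [set rho h | h in [set: gT]].
Proof.
move=> sA; have sphi := Aut_phi hx sA.
case Es : (s (1, o0)) => [h i].
case: (I2_01 i) => Ei; subst i.
  have step : forall g, s (g, o0) = (g * h, o0) -> s (g, o1) = (g * h, o1).
    move=> g E; have -> : (g, o1) = phi x (g, o0) by [].
    by rewrite sphi E.
  have K : forall k, s (x ^+ k, o0) = (x ^+ k * h, o0) /\ s (x ^+ k, o1) = (x ^+ k * h, o1).
    elim=> [|k [_ IH]].
      have E0 : s (x ^+ 0, o0) = (x ^+ 0 * h, o0) by rewrite expg0 mul1g.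
      by split => //; apply: step.
    have E1 : s (x ^+ k.+1, o0) = (x ^+ k.+1 * h, o0).
      have -> : (x ^+ k.+1, o0) = phi x (x ^+ k, o1) by rewrite /phi /= expgS.
      by rewrite sphi IH /phi /= expgS mulgA.
    by split => //; apply: step.
  apply/imsetP; exists h; first by rewrite inE.
  apply/permP => -[g j]; rewrite rhoE /=.
  have /cycleP[k ->] : g \in <[x]> by rewrite hG inE.
  by case: (I2_01 j) => ->; case: (K k).
exfalso.
have E1 : s (1, o1) = (x * h, o0).
  have -> : (1, o1) = phi x (1, o0) by [].
  by rewrite sphi Es.
have E2 : s (x, o0) = (x * h, o1).
  have -> : (x, o0) = phi x (1, o1) by rewrite /phi /= mulg1.
  by rewrite sphi E1.
have E3 : s (x, o1) = (x * (x * h), o0).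
  have -> : (x, o1) = phi x (x, o0) by [].
  by rewrite sphi E2.
have := Aut_arc sA (1, o0) (x, o1).
rewrite Es E3 !arcE invg1 mulg1 mulgA mulgK Tc01 Tc10 !inE eqxx orbT.
have X2 : x * x = x ^+ 2 by rewrite expgS expg1.
rewrite X2 => /orP[/orP[/eqP E|/eqP E]|/eqP E].
- by apply: (nxP hx (k := 4)) => //; apply: (@L1P _ x 2 2); exact: esym E.
- by apply: (nxP hx (k := 3)) => //; apply: (@L1P _ x 1 2); exact: esym E.
- by apply: (nxP hx (k := 1)) => //; apply: (@L2P _ x 1 1); rewrite expg1 E.
Qed.

Lemma rhoM (gT : finGroupType) (m : nat) :
  {in [set: gT] &, {morph (@rho gT m) : a b / a * b}}.
Proof.
by move=> a b _ _; apply/permP => v; rewrite permM !rhoE mulgA.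
Qed.

Canonical rho_morphism (gT : finGroupType) (m : nat) := Morphism (@rhoM gT m).

Lemma if_dir (gT : finGroupType) (x : gT) (hG : <[x]> = [set: gT]) (hx : 4 < #[x]) :
  admits_mPDR gT 2 3.
Proof.
exists (Tc x); split.
- exact: Tc_part.
- move=> [g i]; case: (I2_01 i) => ->.
    by rewrite (out_card (Tc_part x) g o01) (in_card (Tc_part x) g o01)
      Tc_card01 // Tc_card10.
  by rewrite (out_card (Tc_part x) g o10) (in_card (Tc_part x) g o10)
      Tc_card01 // Tc_card10.
have AutE : mcay_Aut (Tc x) = rho_morphism gT 2 @* [set: gT].
  rewrite morphimEdom; apply/eqP; rewrite eqEsubset; apply/andP; split.
    by apply/subsetP => s; apply: Aut_sub.
  by apply/subsetP => s /imsetP[h _ ->]; apply: rho_Aut.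
rewrite AutE isog_sym; apply: sub_isog => //.
by apply/injmP => a b _ _; apply: (rho_inj2 (1, o0)).
Qed.

Unset Implicit Arguments.

Theorem lemma3p2 (gT : finGroupType) (x : gT) :
  <[x]> = [set: gT] -> (admits_mPDR gT 2 3 <-> 5 <= #[x])%N.
Proof.
move=> hG; split.
  case=> T [HT Hreg Hiso]; have := only_if HT Hreg Hiso.
  by rewrite /order hG cardsT.
by move=> hx; apply: (if_dir hG).
Qed.
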